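(* Let $n\ge 2$ and let $\mathcal{C}(I,n)$ be the class of all vectors $\mathbf{X}=(X_1,\ldots,X_n)$ of independent $[0,1]$-valued random variables, with $U(\mathbf{X})=\max_i EX_i$ and $M(\mathbf{X})=E(\max_i X_i)$. Then for all $\mathbf{X}\in\mathcal{C}(I,n)$ with $U(\mathbf{X})>0$, $$M(\mathbf{X})/U(\mathbf{X})\le n,$$ and for all $\mathbf{X}\in\mathcal{C}(I,n)$, $$M(\mathbf{X})-U(\mathbf{X})\le n^{-1/(n-1)}-n^{-n/(n-1)}.$$ Moreover, equality in the latter inequality is attained by $\mathbf{Z}=(Z_1,\ldots,Z_n)$ with $Z_i$ iid Bernoulli random variables satisfying $P(Z_i=1)=1-n^{-1/(n-1)}$ (so that $U(\mathbf{Z})=1-n^{-1/(n-1)}$). *)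

(* Defs.v *)
From HB Require Import structures.
From mathcomp Require Import all_boot all_order all_algebra.
From mathcomp Require Import all_classical all_reals all_analysis.
Set Implicit Arguments. Unset Strict Implicit. Unset Printing Implicit Defensive.
Import Order.TTheory GRing.Theory Num.Theory.
Local Open Scope classical_set_scope.
Local Open Scope ring_scope.

Definition mutually_independent d (T : measurableType d) (R : realType)
  (P : probability T R) (n : nat) (X : 'I_n -> T -> R) : Prop :=
  forall (J : {set 'I_n}) (B : 'I_n -> set R),
    (forall i, measurable (B i)) ->
    P [set x | forall i, i \in J -> B i (X i x)] =
    (\prod_(i in J) P (X i @^-1` B i))%E.

(* U(X) = max_i E X_i  (real-valued; expectations are finite for bounded X) *)
Definition Umax d (T : measurableType d) (R : realType)
  (P : probability T R) (n : nat) (X : 'I_n -> T -> R) : R :=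
  \big[Num.max/0]_(i < n) fine ('E_P[X i]).

Definition Mmax d (T : measurableType d) (R : realType)
  (P : probability T R) (n : nat) (X : 'I_n -> T -> R) : R :=
  fine ('E_P[fun x => \big[Num.max/0]_(i < n) X i x]).

(* Main.v *)
Require Import Defs.
From HB Require Import structures.
From mathcomp Require Import all_boot all_order all_algebra.
From mathcomp Require Import all_classical all_reals all_analysis.
From mathcomp Require Import ring lra.
From mathcomp Require Import measurable_realfun.
Import Order.TTheory GRing.Theory Num.Theory.
Local Open Scope classical_set_scope.
Local Open Scope ring_scope.
Set Implicit Arguments. Unset Strict Implicit.

Lemma Lfun_bounded d (T : measurableType d) (R : realType) (P : probability T R)
  (g : T -> R) (C : R) : measurable_fun setT g -> (forall x, `|g x| <= C) ->
  g \in Lfun P 1.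
Proof.
move=> mg gC; apply/Lfun1_integrable.
apply: measurable_bounded_integrable => //.
  by apply: (le_lt_trans (probability_le1 P measurableT)); exact: ltry.
exists C; split; first by rewrite (@ger0_real _ C)// (le_trans _ (gC point)).
move=> y Cy x _ /=; exact: (le_trans (gC x) (ltW Cy)).
Qed.

Definition EP d (T : measurableType d) (R : realType) (P : probability T R)
  (g : T -> R) : R := fine ('E_P[g]).

Lemma EPD d (T : measurableType d) (R : realType) (P : probability T R)
  (g h : T -> R) : g \in Lfun P 1 -> h \in Lfun P 1 ->
  EP P (fun x => g x + h x) = EP P g + EP P h.
Proof.
move=> gL hL; rewrite /EP (expectationD gL hL) fineD//; exact: expectation_fin_num.
Qed.

Lemma EPZ d (T : measurableType d) (R : realType) (P : probability T R)
  (g : T -> R) (k : R) : g \in Lfun P 1 ->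
  EP P (fun x => k * g x) = k * EP P g.
Proof.
move=> gL; rewrite /EP.
have -> : (fun x => k * g x) = k \o* g by apply/funext => x /=; rewrite mulrC.
by rewrite expectationZl// fineM//; exact: expectation_fin_num.
Qed.

Lemma EPcst d (T : measurableType d) (R : realType) (P : probability T R)
  (r : R) : EP P (fun _ => r) = r.
Proof. by rewrite /EP -[fun _ => r]/(cst r) expectation_cst. Qed.

Lemma EPind d (T : measurableType d) (R : realType) (P : probability T R)
  (A : set T) : measurable A -> EP P (\1_A) = fine (P A).
Proof. by move=> mA; rewrite /EP expectation_indic. Qed.

Lemma EPle d (T : measurableType d) (R : realType) (P : probability T R)
  (g h : T -> R) : g \in Lfun P 1 -> h \in Lfun P 1 ->
  (forall x, g x <= h x) -> EP P g <= EP P h.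
Proof.
move=> gL hL gh; rewrite /EP fine_le//; try exact: expectation_fin_num.
rewrite unlock; apply: le_integral.
- by [].
- exact: (Lfun1_integrable _ _).1 gL.
- exact: (Lfun1_integrable _ _).1 hL.
by move=> x _; rewrite lee_fin.
Qed.

Lemma EPsum d (T : measurableType d) (R : realType) (P : probability T R)
  (I : finType) (g : I -> T -> R) : (forall i, g i \in Lfun P 1) ->
  EP P (fun x => \sum_i g i x) = \sum_i EP P (g i).
Proof.
move=> gL; rewrite -fct_sumE.
pose Q (F : T -> R) (r : R) := F \in Lfun P 1 /\ EP P F = r.
suff [] : Q (\sum_i g i) (\sum_i EP P (g i)) by [].
apply: (big_ind2 Q).
- split; first exact: rpred0.
  by rewrite -(EPcst P 0).
- move=> F1 r1 F2 r2 [F1L <-] [F2L <-]; split; first exact: rpredD.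
  by rewrite -EPD.
- by move=> i _; split.
Qed.

Definition aK (R : realType) (K j : nat) : R := j%:R / K%:R.
Definition Bin (R : realType) (K j : nat) : set R :=
  [set r | @aK R K j - K%:R^-1 < r <= @aK R K j].

Lemma aKS (R : realType) K j : @aK R K j.+1 = @aK R K j + K%:R^-1.
Proof. by rewrite /aK -natr1 mulrDl mul1r. Qed.

Lemma aK0 (R : realType) K : @aK R K 0 = 0.
Proof. by rewrite /aK mul0r. Qed.

Lemma aKK (R : realType) K : (0 < K)%N -> @aK R K K = 1.
Proof. by move=> K0; rewrite /aK divff// pnatr_eq0 -lt0n. Qed.

Lemma Bin_meas (R : realType) K j : measurable (@Bin R K j).
Proof.
have -> : @Bin R K j = [set` Interval (BRight (@aK R K j - K%:R^-1)) (BRight (@aK R K j))].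
  by apply/seteqP; split => x /=; rewrite in_itv.
exact: measurable_itv.
Qed.

Lemma mem_Bin (R : realType) K j r :
  (r \in @Bin R K j) = (@aK R K j - K%:R^-1 < r) && (r <= @aK R K j).
Proof. by apply/idP/idP => [/set_mem//|H]; apply/mem_set. Qed.

Lemma indBin (R : realType) K j r :
  (\1_(@Bin R K j) r : R) = ((r <= @aK R K j.+1 - K%:R^-1)%R : bool)%:R
                     - ((r <= @aK R K j - K%:R^-1)%R : bool)%:R.
Proof.
rewrite indicE mem_Bin aKS addrK.
have d0 : 0 <= K%:R^-1 :> R by rewrite invr_ge0.
have [ra|ar] := leP r (@aK R K j - K%:R^-1).
  by rewrite /= (le_trans ra) ?subrr// gerBl.
by rewrite /= subr0.
Qed.

Lemma sum_indBin (R : realType) K r : (0 < K)%N -> 0 <= r <= 1 ->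
  \sum_(j < K.+1) (\1_(@Bin R K j) r : R) = 1.
Proof.
move=> K0 /andP[r0 r1].
under eq_bigr do rewrite indBin.
rewrite -(big_mkord xpredT (fun j => ((r <= @aK R K j.+1 - K%:R^-1)%R : bool)%:R
                     - ((r <= @aK R K j - K%:R^-1)%R : bool)%:R)).
rewrite telescope_sumr// aKS addrK aKK// r1 aK0 sub0r.
have d0 : 0 < K%:R^-1 :> R by rewrite invr_gt0 ltr0n.
rewrite (_ : (r <= - K%:R^-1) = false) ?subr0//.
by apply/negbTE; rewrite -ltNge (lt_le_trans _ r0)// oppr_lt0.
Qed.

Lemma tangent_pow (R : realFieldType) (s q : R) (m : nat) : 0 <= s -> 0 <= q ->
  q ^+ m.+1 + m.+1%:R * q ^+ m * (s - q) <= s ^+ m.+1.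
Proof.
move=> s0 q0; rewrite -subr_ge0.
have E : s ^+ m.+1 - (q ^+ m.+1 + m.+1%:R * q ^+ m * (s - q)) =
    (s - q) * \sum_(i < m.+1) (s ^+ (m - i) * q ^+ i - q ^+ m).
  rewrite opprD addrA subrXX /= sumrB sumr_const card_ord -mulr_natr; ring.
have key : forall i : 'I_m.+1, q ^+ m = q ^+ (m - i) * q ^+ i.
  by move=> i; rewrite -exprD subnK// -ltnS.
rewrite E; have [sq|qs] := leP q s.
  rewrite mulr_ge0 ?subr_ge0// sumr_ge0// => i _; rewrite subr_ge0 (key i).
  by rewrite ler_wpM2r ?exprn_ge0// lerXn2r// nnegrE.
rewrite -mulrNN -sumrN mulr_ge0 ?oppr_ge0 ?subr_le0 ?(ltW qs)//.
rewrite sumr_ge0// => i _; rewrite oppr_ge0 subr_le0 (key i).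
by rewrite ler_wpM2r ?exprn_ge0// lerXn2r// ?nnegrE// ltW.
Qed.

Lemma q_facts (R : realType) (m : nat) :
  let q : R := m.+2%:R `^ (- (m.+1%:R)^-1) in
  [/\ 0 < q, q <= 1, m.+2%:R * q ^+ m.+1 = 1 &
      q ^+ m.+2 = m.+2%:R `^ (- (m.+2%:R / m.+1%:R))].
Proof.
move=> q.
have n0 : 0 < m.+2%:R :> R by rewrite ltr0n.
have m0 : m.+1%:R != 0 :> R by rewrite pnatr_eq0.
have qpow : forall k : nat, q ^+ k = m.+2%:R `^ (- (m.+1%:R)^-1 * k%:R).
  by move=> k; rewrite powRrM powR_mulrn// powR_ge0.
have q1 : q ^+ m.+1 = m.+2%:R^-1.
  by rewrite qpow mulNr mulVf// powR_inv1// ltW.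
split.
- exact: powR_gt0.
- have [//|q1'] := leP q 1.
  have := ler_eXnr (isT : (0 < m.+1)%N) (ltW q1'); rewrite q1 => h.
  have : m.+2%:R^-1 < 1 :> R by rewrite invf_lt1// ltr1n.
  by move=> h2; have := lt_trans (le_lt_trans h h2) q1'; rewrite ltxx.
- by rewrite q1 divff// gt_eqF.
- rewrite qpow; congr (_ `^ _); rewrite mulNr; congr (- _).
  by rewrite mulrC.
Qed.

Lemma le_bigmax_seq (R : realDomainType) (I : eqType) (s : seq I) (F : I -> R) i :
  i \in s -> F i <= \big[Num.max/0]_(j <- s) F j.
Proof.
elim: s => // a s IH; rewrite inE big_cons => /orP[/eqP ->|/IH h].
  by rewrite le_max lexx.
by rewrite le_max h orbT.
Qed.

Lemma bigmax_le_seq (R : realDomainType) (I : Type) (s : seq I) (F : I -> R) y :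
  0 <= y -> (forall i, F i <= y) -> \big[Num.max/0]_(j <- s) F j <= y.
Proof.
move=> y0 Fy; elim: s => [|a s IH]; first by rewrite big_nil.
by rewrite big_cons ge_max Fy IH.
Qed.

Lemma bigmax_ge0_seq (R : realDomainType) (I : Type) (s : seq I) (F : I -> R) :
  0 <= \big[Num.max/0]_(j <- s) F j.
Proof.
elim: s => [|a s IH]; first by rewrite big_nil.
by rewrite big_cons le_max IH orbT.
Qed.

Lemma max_le_1prod (R : realDomainType) (n : nat) (x : 'I_n -> R) :
  (forall i, 0 <= x i <= 1) ->
  \big[Num.max/0]_(i < n) x i <= 1 - \prod_(i < n) (1 - x i).
Proof.
move=> x01.
have h01 : forall i, 0 <= 1 - x i <= 1.
  by move=> i; have /andP[a b] := x01 i; apply/andP; split; lra.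
apply: bigmax_le_seq.
  rewrite subr_ge0; apply: prodr_ile1 => i _; exact: h01.
move=> i; rewrite (bigD1 i)//=.
have /andP[a b] := h01 i.
have /andP[c d] : 0 <= \prod_(j < n | j != i) (1 - x j) <= 1.
  by rewrite prodr_ge0 ?prodr_ile1// => j _; have /andP[] := h01 j.
have : (1 - x i) * \prod_(j < n | j != i) (1 - x j) <= 1 - x i.
  by rewrite ler_piMr.
lra.
Qed.

Lemma limit_le (R : realType) (x y : R) :
  (forall k : nat, x <= y + (k.+1%:R)^-1) -> x <= y.
Proof.
move=> H; apply/ler_addgt0Pr => e e0.
apply: (le_trans (H (Num.truncn e^-1))); rewrite lerD2l.
rewrite -[leRHS]invrK lef_pV2 ?posrE ?invr_gt0 ?ltr0n//.
exact: ltW (truncnS_gt _).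
Qed.

Lemma Lfun_ind d (T : measurableType d) (R : realType) (P : probability T R)
  (A : set T) : measurable A -> (\1_A : T -> R) \in Lfun P 1.
Proof.
move=> mA; apply: (@Lfun_bounded _ _ _ P _ 1); first exact: measurable_indic.
by move=> x; rewrite indicE; case: (x \in A); rewrite ?normr1 ?normr0.
Qed.

Lemma LfunS d (T : measurableType d) (R : realType) (P : probability T R)
  (I : finType) (g : I -> T -> R) : (forall i, g i \in Lfun P 1) ->
  (fun x => \sum_i g i x) \in Lfun P 1.
Proof. by move=> gL; rewrite -fct_sumE; apply: rpred_sum => i _; exact: gL. Qed.

Lemma LfunZ d (T : measurableType d) (R : realType) (P : probability T R)
  (g : T -> R) (k : R) : g \in Lfun P 1 -> (fun x => k * g x) \in Lfun P 1.
Proof.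
move=> gL; have -> : (fun x => k * g x) = k *: g by apply/funext.
exact: rpredZ.
Qed.

Lemma LfunD d (T : measurableType d) (R : realType) (P : probability T R)
  (g h : T -> R) : g \in Lfun P 1 -> h \in Lfun P 1 ->
  (fun x => g x + h x) \in Lfun P 1.
Proof. by move=> gL hL; exact: rpredD. Qed.

Lemma Lfun_cst1 d (T : measurableType d) (R : realType) (P : probability T R)
  (r : R) : (fun _ : T => r) \in Lfun P 1.
Proof.
apply: (@Lfun_bounded _ _ _ P _ `|r|); first exact: measurable_cst.
by [].
Qed.

Lemma indic_pre (T : Type) (R : realType) (X : T -> R) (B : set R) x :
  (\1_(X @^-1` B) x : R) = \1_B (X x).
Proof. by rewrite !indicE. Qed.

Lemma measurable_bigmax_fun d (T : measurableType d) (R : realType) (I : Type)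
  (s : seq I) (F : I -> T -> R) : (forall i, measurable_fun setT (F i)) ->
  measurable_fun setT (fun x => \big[Num.max/0]_(i <- s) F i x).
Proof.
move=> mF; elim: s => [|a s IH].
  by under eq_fun do rewrite big_nil; exact: measurable_cst.
under eq_fun do rewrite big_cons.
exact: (measurable_maxr (mF a) IH).
Qed.

Lemma Pfin d (T : measurableType d) (R : realType) (P : probability T R)
  (A : set T) : measurable A -> P A \is a fin_num.
Proof.
move=> mA; rewrite ge0_fin_numE ?measure_ge0//.
exact: le_lt_trans (probability_le1 P mA) (ltry _).
Qed.

Lemma prod_indic_bool (R : realType) (n : nat) (b : 'I_n -> bool) :
  \prod_(i < n) (b i)%:R = ([forall i, b i])%:R :> R.
Proof.
case: (boolP [forall i, b i]) => [/forallP H|/forallPn[i Hi]].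
  by rewrite big1// => i _; rewrite H.
by rewrite (bigD1 i)//= (negbTE Hi) mul0r.
Qed.

Lemma key_bound d (T : measurableType d) (R : realType) (P : probability T R)
  (n : nat) (X : 'I_n -> {RV P >-> R}) (K : nat) :
  (0 < K)%N -> mutually_independent P (fun i => (X i : T -> R)) ->
  (forall i x, 0 <= X i x <= 1) ->
  exists s : 'I_n -> R,
   [/\ forall i, 0 <= s i, forall i, 1 - EP P (X i) - K%:R^-1 <= s i &
       EP P (fun x => \big[Num.max/0]_(i < n) X i x) <= 1 - \prod_i s i].
Proof.
move=> K0 ind X01; rewrite /mutually_independent in ind.
pose S := fun (i : 'I_n) (j : nat) => (X i : T -> R) @^-1` @Bin R K j.
have mS : forall i j, measurable (S i j).
  by move=> i j; exact: (measurable_funPTI (X i) (@Bin_meas R K j)).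
pose p := fun (i : 'I_n) (j : nat) => fine (P (S i j)).
pose c := fun j : nat => 1 - @aK R K j.
pose A := fun f : {ffun 'I_n -> 'I_K.+1} =>
  [set x | forall i, i \in [set: 'I_n]%SET -> @Bin R K (f i) (X i x)].
have indA : forall f x, (\1_(A f) x : R) = \prod_i \1_(S i (f i)) x.
  move=> f x; rewrite indicE; case: (boolP (x \in A f)) => [/set_mem H|H].
    by rewrite big1// => i _; rewrite indic_pre indicE (mem_set (H i (finset.in_setT i))).
  have [i Hi] : exists i, ~ S i (f i) x.
    apply: contrapT => nE; apply: (negP H); apply/mem_set => i _.
    by apply: contrapT => ni; apply: nE; exists i.
  by rewrite (bigD1 i)//= indicE memNset// mul0r.
have mA : forall f, measurable (A f).
  move=> f; have -> : A f = \bigcap_(i in [set: 'I_n]) S i (f i).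
    apply/seteqP; split => x /=.
      by move=> H i _; apply: H; rewrite finset.in_setT.
    by move=> H i _; apply: H.
  by apply: fin_bigcap_measurable; [exact: finite_finset|move=> i _; exact: mS].
have PA : forall f, fine (P (A f)) = \prod_i p i (f i).
  move=> f.
  have -> : P (A f) = (\prod_(i in [set: 'I_n]%SET) P (S i (f i)))%E.
    by apply: ind => i; exact: (@Bin_meas R K (f i)).
  rewrite (eq_bigr (fun i => (p i (f i))%:E)); last first.
    by move=> i _; rewrite /p fineK//; exact: Pfin.
  by rewrite prodEFin /= big_mkcond /=; apply: eq_bigr => i _; rewrite finset.in_setT.
have sumS : forall i x, \sum_(j < K.+1) (\1_(S i j) x : R) = 1.
  move=> i x; under eq_bigr do rewrite indic_pre.
  exact: sum_indBin.
have tone : forall i, \sum_(j < K.+1) p i j = 1.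
  move=> i; rewrite -(EPcst P 1).
  have -> : (fun _ : T => 1 : R) = fun x => \sum_(j < K.+1) (\1_(S i j) x : R).
    by apply/funext => x; rewrite sumS.
  rewrite EPsum; last by move=> j; exact: Lfun_ind.
  by apply: eq_bigr => j _; rewrite EPind.
have c0 : forall j : 'I_K.+1, 0 <= c j.
  move=> j; rewrite /c /aK subr_ge0 ler_pdivrMr ?ltr0n// mul1r ler_nat.
  by rewrite -ltnS.
have p0 : forall i j, 0 <= p i j by move=> i j; rewrite /p fine_ge0// measure_ge0.
have Lind : forall i j, (\1_(S i j) : T -> R) \in Lfun P 1.
  by move=> i j; exact: Lfun_ind.
have LX : forall i, (X i : T -> R) \in Lfun P 1.
  move=> i; apply: (@Lfun_bounded _ _ _ P _ 1) => // x.
  by have /andP[a b] := X01 i x; rewrite ger0_norm.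
exists (fun i => \sum_(j < K.+1) c j * p i j); split.
- by move=> i; rewrite sumr_ge0// => j _; rewrite mulr_ge0.
- move=> i.
  have -> : \sum_(j < K.+1) c j * p i j =
      EP P (fun x => \sum_(j < K.+1) c j * \1_(S i j) x).
    rewrite EPsum; last by move=> j; exact: LfunZ.
    by apply: eq_bigr => j _; rewrite EPZ// EPind.
  have -> : 1 - EP P (X i) - K%:R^-1 =
      EP P (fun x => (1 - K%:R^-1) + (-1) * X i x).
    rewrite EPD ?EPcst ?EPZ//; [lra|exact: Lfun_cst1|exact: LfunZ].
  apply: EPle; [apply: LfunD; [exact: Lfun_cst1|exact: LfunZ]|
                apply: LfunS => j; exact: LfunZ|].
  move=> x; set L := (X in X <= _); rewrite -[L]mulr1 -(sumS i x) mulr_sumr.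
  apply: ler_sum => j _; rewrite indic_pre indicE.
  case: (boolP (X i x \in @Bin R K j)); last by rewrite !mulr0.
  rewrite mem_Bin => /andP[h1 h2]; rewrite !mulr1 /c /L mulN1r; move: h1; set a := aK R K j; set e := K%:R^-1; set y := X i x; move=> h1; lra.
pose h := fun x => \sum_(f : {ffun 'I_n -> 'I_K.+1})
  (1 - \prod_i c (f i)) * \1_(A f) x.
have Lh : h \in Lfun P 1.
  by apply: LfunS => f; apply: LfunZ; exact: Lfun_ind.
have Lmax : (fun x => \big[Num.max/0]_(i < n) X i x) \in Lfun P 1.
  apply: (@Lfun_bounded _ _ _ P _ 1).
    by apply: measurable_bigmax_fun => i; exact: measurable_funPT.
  move=> x; rewrite ger0_norm ?bigmax_ge0_seq//.
  by apply: bigmax_le_seq => // i; have /andP[] := X01 i x.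
apply: le_trans (EPle Lmax Lh _) _.
  move=> x; apply: le_trans (max_le_1prod (fun i => X01 i x)) _.
  rewrite /h; under [X in _ <= X]eq_bigr do rewrite indA.
  set Q := 1 - _.
  have one : \prod_(i < n) \sum_(j < K.+1) (\1_(S i j) x : R) = 1.
    by rewrite big1// => i _; exact: sumS.
  rewrite (_ : Q = Q * \prod_(i < n) \sum_(j < K.+1) (\1_(S i j) x : R));
    last by rewrite one mulr1.
  rewrite bigA_distr_bigA mulr_sumr.
  apply: ler_sum => f _; rewrite -indA indicE.
  case: (boolP (x \in A f)) => [/set_mem H|_]; last by rewrite /= !mulr0.
  rewrite !mulr1 /Q lerD2l lerN2; apply: ler_prod => i _.
  rewrite c0 /= /c lerD2l lerN2.
  by have := H i (finset.in_setT i); rewrite /= => /andP[].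
rewrite /h EPsum; last by move=> f; apply: LfunZ; exact: Lfun_ind.
rewrite (eq_bigr (fun f : {ffun 'I_n -> 'I_K.+1} => (1 - \prod_i c (f i)) * \prod_i p i (f i))); last first.
  by move=> f _ /=; rewrite EPZ ?EPind ?PA//; exact: Lfun_ind.
have E1 : \sum_(f : {ffun 'I_n -> 'I_K.+1}) \prod_i p i (f i) = 1.
  rewrite -(bigA_distr_bigA (fun (i : 'I_n) (j : 'I_K.+1) => p i j)).
  by rewrite big1// => i _; exact: tone.
have E2 : \sum_(f : {ffun 'I_n -> 'I_K.+1}) \prod_i (c (f i) * p i (f i)) =
  \prod_i \sum_(j < K.+1) c j * p i j.
  by rewrite (bigA_distr_bigA (fun (i : 'I_n) (j : 'I_K.+1) => c j * p i j)).
under eq_bigr do rewrite mulrBl mul1r -big_split.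
by rewrite sumrB E1 E2.
Qed.

Lemma EP_ge0 d (T : measurableType d) (R : realType) (P : probability T R)
  (g : T -> R) : (forall x, 0 <= g x) -> 0 <= EP P g.
Proof. by move=> g0; rewrite /EP fine_ge0// expectation_ge0. Qed.

Lemma part1 (R : realType) (m : nat) d (T : measurableType d)
  (P : probability T R) (X : 'I_m.+2 -> {RV P >-> R}) :
  mutually_independent P (fun i => (X i : T -> R)) ->
  (forall i x, 0 <= X i x <= 1) ->
  (0 < Umax P (fun i => (X i : T -> R)) ->
     Mmax P (fun i => (X i : T -> R)) / Umax P (fun i => (X i : T -> R))
       <= m.+2%:R) /\
  Mmax P (fun i => (X i : T -> R)) - Umax P (fun i => (X i : T -> R))
    <= m.+2%:R `^ (- (m.+1)%:R^-1) - m.+2%:R `^ (- (m.+2%:R / (m.+1)%:R)).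
Proof.
move=> ind X01.
set U := Umax _ _; set M := Mmax _ _.
have UE : U = \big[Num.max/0]_(i < m.+2) EP P (X i) by [].
have ME : M = EP P (fun x => \big[Num.max/0]_(i < m.+2) X i x) by [].
have LX : forall i, (X i : T -> R) \in Lfun P 1.
  move=> i; apply: (@Lfun_bounded _ _ _ P _ 1) => // x.
  by have /andP[a b] := X01 i x; rewrite ger0_norm.
have Lmax : (fun x => \big[Num.max/0]_(i < m.+2) X i x) \in Lfun P 1.
  apply: (@Lfun_bounded _ _ _ P _ 1).
    by apply: measurable_bigmax_fun => i; exact: measurable_funPT.
  move=> x; rewrite ger0_norm ?bigmax_ge0_seq//.
  by apply: bigmax_le_seq => // i; have /andP[] := X01 i x.
have EU : forall i, EP P (X i) <= U.
  move=> i; rewrite UE; exact: (@le_bigmax_seq R _ (index_enum _) (fun i => EP P (X i)) i (mem_index_enum i)).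
have E0 : forall i, 0 <= EP P (X i).
  by move=> i; apply: EP_ge0 => x; have /andP[] := X01 i x.
split.
  move=> U0; rewrite ler_pdivrMr// ME.
  apply: (le_trans (EPle Lmax (LfunS LX) _)).
    move=> x; apply: bigmax_le_seq.
      by apply: sumr_ge0 => i _; have /andP[] := X01 i x.
    move=> j; rewrite (bigD1 j)//= lerDl sumr_ge0// => i _.
    by have /andP[] := X01 i x.
  rewrite EPsum// (le_trans (ler_sum _ (fun i _ => EU i)))//.
  by rewrite sumr_const card_ord mulr_natl.
have [q0 q1 qm qn] := q_facts R m.
set q := m.+2%:R `^ _ in q0 q1 qm qn *.
rewrite -qn; apply: limit_le => k.
have [s [s0 s1 Ms]] := key_bound (isT : (0 < k.+1)%N) ind X01.
rewrite -/M in Ms.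
set e := (k.+1%:R)^-1 in s1 *.
have e0 : 0 < e by rewrite invr_gt0 ltr0n.
have [sig0|sig0] := leP 0 (1 - U - e).
  have : (1 - U - e) ^+ m.+2 <= \prod_i s i.
    have -> : (1 - U - e) ^+ m.+2 = \prod_(i < m.+2) (1 - U - e) by rewrite prodr_const card_ord.
    apply: ler_prod => i _.
    by rewrite sig0 /= (le_trans _ (s1 i))// lerB// lerB.
  have := tangent_pow m.+1 sig0 (ltW q0).
  rewrite qm mul1r.
  set sg := 1 - U - e; set P1 := _ ^+ m.+2; set P2 := q ^+ m.+2.
  set Pr := \prod_i s i.
  move=> h1 h2; move: Ms; rewrite -/Pr -/M => Ms.
  have : sg = 1 - U - e by [].
  lra.
have : 0 <= \prod_i s i by apply: prodr_ge0 => i _.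
have : q ^+ m.+2 <= q by apply: ler_iXnr => //; exact: ltW.
move: Ms; set Pr := \prod_i s i; set P2 := q ^+ m.+2 => Ms h1 h2.
move: sig0; set u := U; lra.
Qed.

Lemma part2 (R : realType) (m : nat) d (T : measurableType d)
  (P : probability T R) (Z : 'I_m.+2 -> {RV P >-> R}) :
  mutually_independent P (fun i => (Z i : T -> R)) ->
  (forall i x, Z i x = 0 \/ Z i x = 1) ->
  (forall i, P (Z i @^-1` [set 1]) = (1 - m.+2%:R `^ (- (m.+1)%:R^-1))%:E) ->
  Umax P (fun i => (Z i : T -> R)) = 1 - m.+2%:R `^ (- (m.+1)%:R^-1) /\
  Mmax P (fun i => (Z i : T -> R)) - Umax P (fun i => (Z i : T -> R))
    = m.+2%:R `^ (- (m.+1)%:R^-1) - m.+2%:R `^ (- (m.+2%:R / (m.+1)%:R)).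
Proof.
move=> ind Z01 PZ; rewrite /mutually_independent in ind.
have [q0 q1 qm qn] := q_facts R m.
set q := m.+2%:R `^ _ in q0 q1 qm qn PZ *.
rewrite -qn.
have mZ1 : forall i, measurable (Z i @^-1` [set 1]).
  by move=> i; exact: (measurable_funPTI (Z i) (measurable_set1 _)).
have mZ0 : forall i, measurable (Z i @^-1` [set 0]).
  by move=> i; exact: (measurable_funPTI (Z i) (measurable_set1 _)).
have ZE : forall i, (Z i : T -> R) = \1_(Z i @^-1` [set 1]).
  move=> i; apply/funext => x; rewrite indicE.
  case: (Z01 i x) => h; rewrite h.
    by rewrite memNset//= h => /eqP; rewrite eq_sym oner_eq0.
  by rewrite mem_set.
have EZ : forall i, EP P (Z i) = 1 - q.
  by move=> i; rewrite ZE EPind// PZ.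
have UE : Umax P (fun i => (Z i : T -> R)) = 1 - q.
  rewrite /Umax.
  have -> : \big[Num.max/0]_(i < m.+2) fine 'E_P[Z i] =
            \big[Num.max/0]_(i < m.+2) (1 - q).
    by apply: eq_bigr => i _; exact: EZ.
  apply/eqP; rewrite eq_le; apply/andP; split.
    by apply: bigmax_le_seq => //; rewrite subr_ge0.
  exact: (@le_bigmax_seq R _ (index_enum _) (fun _ => 1 - q) ord0 (mem_index_enum _)).
split => //; rewrite UE.
pose A := [set x | forall i, i \in [set: 'I_m.+2]%SET -> [set (0:R)] (Z i x)].
have PA : P A = (q ^+ m.+2)%:E.
  have -> : P A = (\prod_(i in [set: 'I_m.+2]%SET) P (Z i @^-1` [set 0%R]))%E.
    by apply: ind => i; exact: measurable_set1.
  have P0 : forall i, P (Z i @^-1` [set 0]) = q%:E.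
    move=> i; have -> : Z i @^-1` [set 0] = ~` (Z i @^-1` [set 1]).
      apply/seteqP; split => x /=.
        by move=> -> /eqP; rewrite eq_sym oner_eq0.
      by case: (Z01 i x).
    by rewrite probability_setC// PZ -EFinB; congr (_%:E); lra.
  rewrite (eq_bigr (fun=> q%:E)); last by move=> i _; exact: P0.
  rewrite prodEFin prodr_const; congr (_%:E); congr (_ ^+ _).
  by rewrite cardsT card_ord.
have mA : measurable A.
  have -> : A = \bigcap_(i in [set: 'I_m.+2]) (Z i @^-1` [set 0]).
    apply/seteqP; split => x /=.
      by move=> H i _; apply: H; rewrite finset.in_setT.
    by move=> H i _; apply: H.
  by apply: fin_bigcap_measurable; [exact: finite_finset|move=> i _; exact: mZ0].
have MaxE : (fun x => \big[Num.max/0]_(i < m.+2) Z i x) =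
    (fun x => 1 + (-1) * \1_A x).
  apply/funext => x; rewrite indicE.
  case: (boolP (x \in A)) => [/set_mem H|H].
    rewrite mulr1 subrr; apply/eqP; rewrite eq_le bigmax_ge0_seq andbT.
    apply: bigmax_le_seq => // i; by rewrite (H i (finset.in_setT i)).
  have [i Hi] : exists i, Z i x = 1.
    apply: contrapT => nE; apply: (negP H); apply/mem_set => i _.
    by case: (Z01 i x) => // h; exfalso; apply: nE; exists i.
  rewrite mulr0 addr0; apply/eqP; rewrite eq_le; apply/andP; split.
    apply: bigmax_le_seq => // j; by case: (Z01 j x) => ->.
  rewrite -Hi.
  exact: (@le_bigmax_seq R _ (index_enum _) (fun i => Z i x) i (mem_index_enum _)).
have -> : Mmax P (fun i => (Z i : T -> R)) = 1 - q ^+ m.+2.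
  rewrite /Mmax -/(EP P _) MaxE EPD.
  - by rewrite EPcst EPZ ?EPind ?PA ?mulN1r//; exact: Lfun_ind.
  - exact: Lfun_cst1.
  - by apply: LfunZ; exact: Lfun_ind.
lra.
Qed.

Unset Implicit Arguments. Set Strict Implicit.

Theorem mainTheorem3 (R : realType) (n : nat) (hn : (2 <= n)%N) :
  (* class C(I,n): independent [0,1]-valued random variables *)
  (forall (d : measure_display) (T : measurableType d) (P : probability T R)
          (X : 'I_n -> {RV P >-> R}),
      mutually_independent P (fun i => (X i : T -> R)) ->
      (forall i x, 0 <= X i x <= 1) ->
      (0 < Umax P (fun i => (X i : T -> R)) ->
         Mmax P (fun i => (X i : T -> R)) / Umax P (fun i => (X i : T -> R))
           <= n%:R) /\
      Mmax P (fun i => (X i : T -> R)) - Umax P (fun i => (X i : T -> R))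
        <= n%:R `^ (- (n.-1)%:R^-1) - n%:R `^ (- (n%:R / (n.-1)%:R)))
  /\
  (* equality for iid Bernoulli(1 - n^{-1/(n-1)}) *)
  (forall (d : measure_display) (T : measurableType d) (P : probability T R)
          (Z : 'I_n -> {RV P >-> R}),
      mutually_independent P (fun i => (Z i : T -> R)) ->
      (forall i x, Z i x = 0 \/ Z i x = 1) ->
      (forall i, P (Z i @^-1` [set 1]) = (1 - n%:R `^ (- (n.-1)%:R^-1))%:E) ->
      Umax P (fun i => (Z i : T -> R)) = 1 - n%:R `^ (- (n.-1)%:R^-1) /\
      Mmax P (fun i => (Z i : T -> R)) - Umax P (fun i => (Z i : T -> R))
        = n%:R `^ (- (n.-1)%:R^-1) - n%:R `^ (- (n%:R / (n.-1)%:R))).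
Proof.
case: n hn => [|[|m]] // hn.
split.
- by move=> d T P X ind X01; exact: part1.
- by move=> d T P Z ind Z01 PZ; exact: part2.
Qed.
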